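(* Every Sasakian Lie algebroid is $K$-contact; that is, if $E$ is a contact Riemannian Lie algebroid whose associated almost contact Riemannian structure $(F_E,\xi,\eta,g_E)$ is normal, then $\xi$ is a Killing section of $g_E$.
   Context: A Lie algebroid $(E,\rho_E,[\cdot,\cdot]_E)$ over $M$ is a vector bundle with anchor $\rho_E:E\to TM$ and Lie bracket on $\Gamma(E)$ with $[s_1,fs_2]_E=f[s_1,s_2]_E+\rho_E(s_1)(f)s_2$. For a 1-form $\eta$, $(d_E\eta)(s_1,s_2)=\frac12\{\rho_E(s_1)(\eta(s_2))-\rho_E(s_2)(\eta(s_1))-\eta([s_1,s_2]_E)\}$. For $E$ of rank $2m+1$, an almost contact Riemannian structure $(F_E,\xi,\eta,g_E)$: endomorphism $F_E$, $\xi\in\Gamma(E)$, $\eta\in\Gamma(E^* )$, bundle metric $g_E$ with $F_E^2=-I_E+\eta\otimes\xi$, $\eta(\xi)=1$, $g_E(F_Es_1,F_Es_2)=g_E(s_1,s_2)-\eta(s_1)\eta(s_2)$; fundamental form $\Omega_E(s_1,s_2)=g_E(s_1,F_Es_2)$. $E$ is contact Riemannian if also $\eta\wedge(d_E\eta)^m$ vanishes nowhere and $d_E\eta=\Omega_E$. The structure is normal if $N_{F_E}+2\,d_E\eta\otimes\xi=0$, where $N_{F_E}(s_1,s_2)=[F_Es_1,F_Es_2]_E-F_E[F_Es_1,s_2]_E-F_E[s_1,F_Es_2]_E+F_E^2[s_1,s_2]_E$. A Sasakian Lie algebroid is a contact Riemannian Lie algebroid whose structure is normal. $\xi$ is Killing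 if $\rho_E(\xi)(g_E(s_1,s_2))-g_E([\xi,s_1]_E,s_2)-g_E(s_1,[\xi,s_2]_E)=0$ for all $s_1,s_2$; $K$-contact means contact Riemannian with $\xi$ Killing. *)

(* Defs.v *)
(* A Lie algebroid is modelled algebraically, at the level of
   sections: A = ring of (smooth) functions on M, an R-algebra; E = module of
   sections Gamma(E) over A; points of M = R-algebra characters A -> R. *)
From HB Require Import structures.
From mathcomp Require Import all_boot all_order all_fingroup all_algebra.
Set Implicit Arguments. Unset Strict Implicit. Unset Printing Implicit Defensive.
Import Order.TTheory GRing.Theory Num.Theory.
Local Open Scope ring_scope.

Section LieAlgebroid.
Variables (R : realFieldType) (A : comAlgType R) (E : lmodType A).

Definition is_lie_algebroid (rho : E -> A -> A) (br : E -> E -> E) : Prop :=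
  [/\ [/\
      (forall (a : A) (s t : E) (f : A), rho (a *: s + t) f = a * rho s f + rho t f),
      (forall (s : E) (r : R) (f g : A), rho s (r *: f + g) = r *: rho s f + rho s g),
      (forall (s : E) (f g : A), rho s (f * g) = rho s f * g + f * rho s g) &
      (forall (r : R) (s1 s2 t : E),
          br (r%:A *: s1 + s2) t = r%:A *: br s1 t + br s2 t)],
      (forall s t : E, br s t = - br t s) &
      [/\ (forall s1 s2 s3 : E,
            br s1 (br s2 s3) + br s2 (br s3 s1) + br s3 (br s1 s2) = 0),
          (forall (s1 s2 : E) (f : A), br s1 (f *: s2) = f *: br s1 s2 + rho s1 f *: s2) &
          (forall (s1 s2 : E) (f : A),
             rho (br s1 s2) f = rho s1 (rho s2 f) - rho s2 (rho s1 f))]].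

Definition tensorial_endo (F : E -> E) : Prop :=
  forall (a : A) (s t : E), F (a *: s + t) = a *: F s + F t.

Definition tensorial_form (eta : E -> A) : Prop :=
  forall (a : A) (s t : E), eta (a *: s + t) = a * eta s + eta t.

Definition point := {lrmorphism A -> R^o}.

Definition bundle_metric (g : E -> E -> A) : Prop :=
  [/\ (forall (a : A) (s t u : E), g (a *: s + t) u = a * g s u + g t u),
      (forall s t : E, g s t = g t s) &
      (forall (x : point) (s : E), 0 <= x (g s s))].

Definition dE (rho : E -> A -> A) (br : E -> E -> E) (eta : E -> A) (s1 s2 : E) : A :=
  (2^-1 : R)%:A * (rho s1 (eta s2) - rho s2 (eta s1) - eta (br s1 s2)).

Definition fundamental_form (F : E -> E) (g : E -> E -> A) (s1 s2 : E) : A :=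
  g s1 (F s2).

Definition almost_contact_riemannian (F : E -> E) (xi : E) (eta : E -> A)
    (g : E -> E -> A) : Prop :=
  [/\ [/\ tensorial_endo F, tensorial_form eta & bundle_metric g],
      (forall s, F (F s) = - s + eta s *: xi),
      eta xi = 1 &
      (forall s1 s2, g (F s1) (F s2) = g s1 s2 - eta s1 * eta s2)].

(* (eta /\ (d_E eta)^m)(s_0,...,s_2m), up to the (irrelevant, nonzero)
   normalising constant of the wedge product *)
Definition eta_wedge_deta_pow (rho : E -> A -> A) (br : E -> E -> E) (eta : E -> A)
    (m : nat) (s : 'I_(m.*2.+1) -> E) : A :=
  \sum_(sigma : 'S_(m.*2.+1))
     (-1) ^+ (odd_perm sigma) *
     (eta (s (sigma ord0)) *
      \prod_(i < m) dE rho br eta (s (sigma (inord i.*2.+1))) (s (sigma (inord i.*2.+2)))).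

Definition vanishes_nowhere (m : nat) (omega : ('I_(m.*2.+1) -> E) -> A) : Prop :=
  forall x : point, exists s : 'I_(m.*2.+1) -> E, x (omega s) != 0.

Definition contact_riemannian (m : nat) (rho : E -> A -> A) (br : E -> E -> E)
    (F : E -> E) (xi : E) (eta : E -> A) (g : E -> E -> A) : Prop :=
  [/\ almost_contact_riemannian F xi eta g,
      vanishes_nowhere (eta_wedge_deta_pow rho br eta (m:=m)) &
      (forall s1 s2, dE rho br eta s1 s2 = fundamental_form F g s1 s2)].

Definition nijenhuis (br : E -> E -> E) (F : E -> E) (s1 s2 : E) : E :=
  br (F s1) (F s2) - F (br (F s1) s2) - F (br s1 (F s2)) + F (F (br s1 s2)).

Definition normal (rho : E -> A -> A) (br : E -> E -> E) (F : E -> E) (xi : E)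
    (eta : E -> A) : Prop :=
  forall s1 s2, nijenhuis br F s1 s2 + (2%:R * dE rho br eta s1 s2) *: xi = 0.

Definition sasakian (m : nat) rho br F xi eta g : Prop :=
  contact_riemannian m rho br F xi eta g /\ normal rho br F xi eta.

Definition killing (rho : E -> A -> A) (br : E -> E -> E) (g : E -> E -> A) (xi : E) : Prop :=
  forall s1 s2, rho xi (g s1 s2) - g (br xi s1) s2 - g s1 (br xi s2) = 0.

Definition K_contact (m : nat) rho br F xi eta g : Prop :=
  contact_riemannian m rho br F xi eta g /\ killing rho br g xi.

End LieAlgebroid.

(* Main.v *)
Require Import Defs.
From mathcomp Require Import all_boot all_order all_fingroup all_algebra.
From mathcomp Require Import ring.
Import GRing.Theory Num.Theory.
Local Open Scope ring_scope.

Lemma selfadd0 (V : zmodType) (x y : V) : x = y + x -> y = 0.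
Proof. by move/eqP; rewrite -subr_eq subrr eq_sym => /eqP. Qed.

Theorem theorem4p2 (R : realFieldType) (A : comAlgType R) (E : lmodType A)
    (m : nat) (rho : E -> A -> A) (br : E -> E -> E)
    (F : E -> E) (xi : E) (eta : E -> A) (g : E -> E -> A) :
  is_lie_algebroid rho br ->
  sasakian m rho br F xi eta g ->
  K_contact m rho br F xi eta g.
Proof.
move=> [[rhoL rhoD rhoM brL] brS [brJ brLeib rhoBr]].
move=> [[[[Ften etaten [gL gS gpos]] F2 etaxi gF] nw dEO] norm].
split; first by split.
move: Ften etaten; rewrite /tensorial_endo /tensorial_form => Ften etaten.
have F0 : F 0 = 0.
  by have := Ften 1 0 0; rewrite !scale1r addr0; move/selfadd0.
have FD s t : F (s + t) = F s + F t by rewrite -[s]scale1r Ften !scale1r.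
have FZ a s : F (a *: s) = a *: F s by rewrite -[_ *: s]addr0 Ften F0 addr0.
have FN s : F (- s) = - F s by rewrite -scaleN1r FZ scaleN1r.
have eta0 : eta 0 = 0.
  by have := etaten 1 0 0; rewrite scale1r addr0 !mul1r; move/selfadd0.
have etaD s t : eta (s + t) = eta s + eta t by rewrite -[s]scale1r etaten !scale1r mul1r.
have etaZ a s : eta (a *: s) = a * eta s by rewrite -[_ *: s]addr0 etaten eta0 addr0.
have etaN s : eta (- s) = - eta s by rewrite -scaleN1r etaZ mulN1r.
have g0 u : g 0 u = 0.
  by have := gL 1 0 0 u; rewrite scale1r addr0 !mul1r; move/selfadd0.
have gD s t u : g (s + t) u = g s u + g t u by rewrite -[s]scale1r gL !scale1r mul1r.
have gZ a s u : g (a *: s) u = a * g s u by rewrite -[_ *: s]addr0 gL g0 addr0.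
have gN s u : g (- s) u = - g s u by rewrite -scaleN1r gZ mulN1r.
have g0r u : g u 0 = 0 by rewrite gS g0.
have gDr s t u : g u (s + t) = g u s + g u t by rewrite gS gD !(gS u).
have gZr a s u : g u (a *: s) = a * g u s by rewrite gS gZ (gS u).
have gNr s u : g u (- s) = - g u s by rewrite gS gN (gS u).
have br0 t : br 0 t = 0.
  by have := brL 1 0 0 t; rewrite scaler0 addr0 !scale1r; move/selfadd0.
have brD s1 s2 t : br (s1 + s2) t = br s1 t + br s2 t.
  by have := brL 1 s1 s2 t; rewrite !scale1r.
have brN s t : br (- s) t = - br s t.
  by have := brL (-1) s 0 t; rewrite !addr0 br0 addr0 scaleNr scale1r !scaleN1r.
have br0r t : br t 0 = 0 by rewrite brS br0 oppr0.
have brDr s1 s2 t : br t (s1 + s2) = br t s1 + br t s2.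
  by rewrite brS brD opprD -!brS.
have brNr s t : br t (- s) = - br t s by rewrite brS brN opprK -brS.
set h : A := (2^-1 : R)%:A.
have h2 : h * 2%:R = 1.
  rewrite /h mulr_algl -scaler_nat scalerA.
  by rewrite mulVf ?scale1r // pnatr_eq0.
have halfE (X : A) : h * X = 0 -> X = 0.
  by move=> H; rewrite -[X]mul1r -h2 (mulrC h) -mulrA H mulr0.
have brss s : br s s = 0.
  have H : br s s + br s s = 0 by rewrite {1}brS addNr.
  by rewrite -[br s s]scale1r -h2 -scalerA scaler_nat mulr2n H scaler0.
have rho0 s : rho s 0 = 0.
  by have := rhoD s 1 0 0; rewrite !scale1r addr0; move/selfadd0.
have rhoDf s f1 f2 : rho s (f1 + f2) = rho s f1 + rho s f2.
  by have := rhoD s 1 f1 f2; rewrite !scale1r.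
have rhoZf s (r : R) f : rho s (r *: f) = r *: rho s f.
  by rewrite -[_ *: f]addr0 rhoD rho0 addr0.
have rhoNf s f : rho s (- f) = - rho s f by rewrite -scaleN1r rhoZf scaleN1r.
have rho1 s : rho s 1 = 0.
  by have := rhoM s 1 1; rewrite mul1r mulr1 mul1r; move/selfadd0.
have rhoh s X : rho s (h * X) = h * rho s X by rewrite /h !mulr_algl rhoZf.
have FFxi : F (F xi) = 0 by rewrite F2 etaxi scale1r addNr.
set a := eta (F xi).
have Fxi_a : F xi = a *: xi.
  by have := F2 (F xi); rewrite FFxi F0 => /eqP; rewrite eq_sym addrC subr_eq0 => /eqP.
have dExx : dE rho br eta xi xi = 0 by rewrite /dE subrr brss eta0 subrr mulr0.
have ag : a * g xi xi = 0.
  by have := dEO xi xi; rewrite dExx /fundamental_form Fxi_a gZr => ->.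
have gxx : g xi xi = 1.
  have := gF xi xi; rewrite Fxi_a gZ gZr etaxi mulr1 ag mulr0.
  by move/eqP; rewrite eq_sym subr_eq0 => /eqP.
have a0 : a = 0 by rewrite -[a]mulr1 -gxx ag.
have Fxi : F xi = 0 by rewrite Fxi_a a0 scale0r.
have etaF s : eta (F s) = 0.
  have H0 : F (F (F s)) = - F s by rewrite (F2 s) FD FN FZ Fxi scaler0 addr0.
  have H1 := F2 (F s); rewrite H0 addrC in H1; move/selfadd0: H1 => H.
  by have := congr1 eta H; rewrite etaZ etaxi mulr1 eta0.
have gxi s : g xi s = eta s.
  have := gF xi s; rewrite Fxi g0 etaxi mul1r => /eqP.
  by rewrite eq_sym subr_eq0 => /eqP.
have gxir s : g s xi = eta s by rewrite gS gxi.
have Leta s : rho xi (eta s) = eta (br xi s).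
  have := dEO xi s; rewrite /fundamental_form gxi etaF /dE etaxi rho1 subr0.
  by move/halfE/eqP; rewrite subr_eq0 => /eqP.
have LF s : br xi (F s) = F (br xi s).
  have dE0 : dE rho br eta xi s = 0 by rewrite dEO /fundamental_form gxi etaF.
  have H : F (br xi (F s)) = F (F (br xi s)).
    move: (norm xi s); rewrite /nijenhuis Fxi !br0 F0 subrr sub0r dE0 mulr0 scale0r addr0.
    by rewrite addrC => /eqP; rewrite subr_eq0 => /eqP ->.
  have := congr1 F H; rewrite (F2 (br xi (F s))) (F2 (br xi s)) FD FN FZ Fxi scaler0 addr0.
  by rewrite -Leta etaF rho0 scale0r addr0 => /oppr_inj.
have LdE s1 s2 : rho xi (dE rho br eta s1 s2) =
   dE rho br eta (br xi s1) s2 + dE rho br eta s1 (br xi s2).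
  rewrite /dE rhoh -mulrDr; congr (_ * _).
  rewrite !rhoBr -!Leta !rhoDf !rhoNf Leta.
  have J : br xi (br s1 s2) = br (br xi s1) s2 + br s1 (br xi s2).
    have := brJ xi s1 s2; rewrite (brS s2 xi) brNr (brS s2 (br xi s1)).
    by move/eqP; rewrite -addrA -opprD subr_eq0 => /eqP ->; exact: addrC.
  rewrite J etaD; ring.
move=> s1 s2.
set K := fun t => rho xi (g s1 t) - g (br xi s1) t - g s1 (br xi t).
have KD t u : K (t + u) = K t + K u.
  by rewrite /K gDr rhoDf brDr !gDr; ring.
have KN t : K (- t) = - K t.
  by rewrite /K gNr rhoNf brNr !gNr; ring.
have KF t : K (F t) = 0.
  rewrite /K LF -!/(fundamental_form F g _ _) -!dEO LdE; ring.
have Kxi c : K (c *: xi) = 0.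
  rewrite /K brLeib brss scaler0 add0r !gZr !gxir rhoM Leta; ring.
suff : K s2 = 0 by [].
have -> : s2 = - F (F s2) + eta s2 *: xi by rewrite F2 opprD opprK subrK.
by rewrite KD KN KF oppr0 add0r Kxi.
Qed.
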